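(* Let $M\in\mathbb{R}^{n\times n}$ be symmetric positive definite, let $N\ge1$, let timestep sizes $\delta_0,\delta_1,\dots,\delta_N>0$, let $\theta_0,\theta_{-1}\in\mathbb{R}^n$ be fixed, and let controls $u_1,\dots,u_N$ be fixed, where frame $i$ uses control $u_{\iota(i)}$. Let $\bar P(\cdot,u):\mathbb{R}^n\to\mathbb{R}$ be twice differentiable with locally Lipschitz second derivatives and $L$-curvature bounded (for some $L>0$) for every control value $u$. For $i=1,\dots,N$ and $\theta=(\theta_1,\dots,\theta_N)$ let $$\bar E_i=\frac{1}{2\delta_i^2}\Big\|\theta_i-\big(1+\tfrac{\delta_i}{\delta_{i-1}}\big)\theta_{i-1}+\tfrac{\delta_i}{\delta_{i-1}}\theta_{i-2}\Big\|_M^2+\bar P(\theta_i,u_{\iota(i)}),$$ $\Lambda_i=\frac12\|\partial\bar E_i/\partial\theta_i\|^2$, $\Lambda(\theta)=\sum_{i=1}^N\Lambda_i$, let $G(\theta)\in\mathbb{R}^{nN}$ be the stacked vector $(\partial\bar E_1/\partial\theta_1,\dots,\partial\bar E_N/\partial\theta_N)$, and let $J(\theta)=\partial G/\partial\theta\in\mathbb{R}^{nN\times nN}$ be its Jacobian (the block matrix whose $(i,k)$ block is $\partial^2\bar E_i/\partial\theta_i\partial\theta_k$). Suppose $\delta_i<\sqrt{\sigma_{\min}(M)/L}$ for all $i=1,\dots,N$. Then: (i) for each $i$ and fixed $\theta_{i-1},\theta_{i-2}$, the function $\theta_i\mapsto\Lambda_i$ satisfies the Polyak–Łojasiewicz condition,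 i.e. there is $\mu>0$ with $\frac12\|\nabla_{\theta_i}\Lambda_i\|^2\ge\mu(\Lambda_i-\inf\Lambda_i)$ for all $\theta_i$; (ii) $\sigma_{\min}(J(\theta))$ is bounded away from zero: there is $c>0$ (not depending on $\theta$ or the controls) with $\sigma_{\min}(J(\theta))\ge c$ for all $\theta$; (iii) $\theta\mapsto\Lambda(\theta)$ satisfies the Polyak–Łojasiewicz condition on $\mathbb{R}^{nN}$.
   Context: $\|x\|_M^2=x^TMx$; $\sigma_{\min}$ denotes the smallest singular value. A function $\phi:\mathbb{R}^n\to\mathbb{R}$ is $L$-weakly convex if $\phi(x)+\frac{L}{2}\|x\|^2$ is convex; $L$-gradient continuous if $\|\nabla\phi(x)-\nabla\phi(x')\|\le L\|x-x'\|$ for all $x,x'$; $L$-curvature bounded if both hold. The map $\iota$ assigns to each frame index the index of the control used there. *)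

(* Defs.v *)
From HB Require Import structures.
From mathcomp Require Import all_boot all_order all_algebra.
From mathcomp Require Import all_classical all_reals all_analysis.
Set Implicit Arguments. Unset Strict Implicit. Unset Printing Implicit Defensive.
Import Order.TTheory GRing.Theory Num.Theory.
Import numFieldNormedType.Exports.
Local Open Scope classical_set_scope.
Local Open Scope ring_scope.

Section Defs.
Variable R : realType.

Definition sqn m (v : 'rV[R]_m) : R := \sum_(j < m) v 0 j ^+ 2.
Definition enorm m (v : 'rV[R]_m) : R := Num.sqrt (sqn v).

Definition qM n (M : 'M[R]_n) (x : 'rV[R]_n) : R := (x *m M *m x^T) 0 0.

Definition sym_posdef n (M : 'M[R]_n) : Prop :=
  M^T = M /\ forall x : 'rV[R]_n, x != 0 -> 0 < qM M x.

Definition grad m (f : 'rV[R]_m -> R) (x : 'rV[R]_m) : 'rV[R]_m :=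
  \row_(j < m) derive f x (delta_mx 0 j).

Definition jac m p (F : 'rV[R]_m -> 'rV[R]_p) (x : 'rV[R]_m) : 'M[R]_(p, m) :=
  \matrix_(a < p, b < m) derive (fun y => F y 0 a) x (delta_mx 0 b).

Definition hess m (f : 'rV[R]_m -> R) (x : 'rV[R]_m) : 'M[R]_m := jac (grad f) x.

Definition sigma_min k (A : 'M[R]_k) : R :=
  Num.sqrt (inf [set l : R | eigenvalue (A^T *m A) l]).

Definition convex_fun m (f : 'rV[R]_m -> R) : Prop :=
  forall x y (t : R), 0 <= t <= 1 ->
    f (t *: x + (1 - t) *: y) <= t * f x + (1 - t) * f y.

Definition weakly_convex m (L : R) (f : 'rV[R]_m -> R) : Prop :=
  convex_fun (fun x => f x + L / 2 * sqn x).

Definition gradient_continuous m (L : R) (f : 'rV[R]_m -> R) : Prop :=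
  forall x x', enorm (grad f x - grad f x') <= L * enorm (x - x').

Definition curvature_bounded m (L : R) (f : 'rV[R]_m -> R) : Prop :=
  weakly_convex L f /\ gradient_continuous L f.

Definition twice_diff_loclip_hess m (f : 'rV[R]_m -> R) : Prop :=
  (forall x, differentiable f x) /\
  (forall x, differentiable (grad f) x) /\
  (forall x, exists2 r : R, 0 < r & exists K : R, forall y z,
      enorm (y - x) < r -> enorm (z - x) < r ->
      enorm (mxvec (hess f y - hess f z)) <= K * enorm (y - z)).

Definition PL m (f : 'rV[R]_m -> R) : Prop :=
  exists2 mu : R, 0 < mu & forall x,
    1 / 2 * sqn (grad f x) >= mu * (f x - inf (range f)).

(* ---- the objects of the statement ----
   Frames are indexed by k : 'I_N, frame k being the paper's frame i = k+1.
   The trajectory theta = (theta_1,...,theta_N) is stored as Th : 'M_(N,n),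
   row k being theta_{k+1}; the stacked vector in R^{nN} is mxvec Th. *)

Definition setrow N n (Th : 'M[R]_(N, n)) (k : 'I_N) (t : 'rV[R]_n) : 'M[R]_(N, n) :=
  \matrix_(a < N, j < n) (if a == k then t 0 j else Th a j).

(* thext th0 thm1 Th m = theta_{m-1}:  m = 0 -> theta_{-1}, m = 1 -> theta_0,
   m = k+2 -> theta_{k+1} = row k Th *)
Definition thext N n (th0 thm1 : 'rV[R]_n) (Th : 'M[R]_(N, n)) (m : nat) : 'rV[R]_n :=
  match m with
  | 0 => thm1
  | 1 => th0
  | m'.+2 => oapp (fun k : 'I_N => row k Th) 0 (insub m')
  end.

Variables (U : Type) (n N : nat) (M : 'M[R]_n) (del : nat -> R)
  (th0 thm1 : 'rV[R]_n) (P : 'rV[R]_n -> U -> R) (u : 'I_N -> U)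
  (iota : 'I_N -> 'I_N).

(* E-bar_i for paper index i = k+1; del m = delta_m *)
Definition Ebar (k : 'I_N) (Th : 'M[R]_(N, n)) : R :=
  let di := del k.+1 in let dim1 := del k in
  1 / (2 * di ^+ 2) *
    qM M (row k Th - (1 + di / dim1) *: thext th0 thm1 Th k.+1
          + (di / dim1) *: thext th0 thm1 Th k)
  + P (row k Th) (u (iota k)).

Definition dEbar (k : 'I_N) (Th : 'M[R]_(N, n)) : 'rV[R]_n :=
  grad (fun t => Ebar k (setrow Th k t)) (row k Th).

Definition Lambda_i (k : 'I_N) (Th : 'M[R]_(N, n)) : R := 1 / 2 * sqn (dEbar k Th).

Definition Lambda (v : 'rV[R]_(N * n)) : R := \sum_(k < N) Lambda_i k (vec_mx v).

Definition Gvec (v : 'rV[R]_(N * n)) : 'rV[R]_(N * n) :=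
  mxvec (\matrix_(k < N) dEbar k (vec_mx v)).

Definition Jmat (v : 'rV[R]_(N * n)) : 'M[R]_(N * n) := jac Gvec v.

End Defs.

(* Main.v *)
Require Import Defs.
From HB Require Import structures.
From mathcomp Require Import all_boot all_order all_algebra.
From mathcomp Require Import all_classical all_reals all_analysis.
From mathcomp Require Import ring lra zify.
Import Order.TTheory GRing.Theory Num.Theory.
Import numFieldNormedType.Exports.
Local Open Scope classical_set_scope.
Local Open Scope ring_scope.

Set Implicit Arguments. Unset Strict Implicit. Unset Printing Implicit Defensive.

Section LA.
Variable R : realType.

Definition dot m (x y : 'rV[R]_m) : R := (x *m y^T) 0 0.

Lemma dotE m (x y : 'rV[R]_m) : dot x y = \sum_(j < m) x 0 j * y 0 j.
Proof. by rewrite /dot mxE; apply: eq_bigr => j _; rewrite mxE. Qed.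

Lemma sqn_dot m (x : 'rV[R]_m) : sqn x = dot x x.
Proof. by rewrite dotE /sqn; apply: eq_bigr => j _; rewrite expr2. Qed.

Lemma dotC m (x y : 'rV[R]_m) : dot x y = dot y x.
Proof. by rewrite !dotE; apply: eq_bigr => j _; rewrite mulrC. Qed.

Lemma dotDl m (x y z : 'rV[R]_m) : dot (x + y) z = dot x z + dot y z.
Proof. by rewrite /dot mulmxDl mxE. Qed.

Lemma dotZl m a (x z : 'rV[R]_m) : dot (a *: x) z = a * dot x z.
Proof. by rewrite /dot -scalemxAl mxE. Qed.

Lemma dotNl m (x z : 'rV[R]_m) : dot (- x) z = - dot x z.
Proof. by rewrite /dot mulNmx mxE. Qed.

Lemma dotDr m (x y z : 'rV[R]_m) : dot z (x + y) = dot z x + dot z y.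
Proof. by rewrite dotC dotDl !(dotC z). Qed.

Lemma dotZr m a (x z : 'rV[R]_m) : dot z (a *: x) = a * dot z x.
Proof. by rewrite dotC dotZl dotC. Qed.

Lemma dotNr m (x z : 'rV[R]_m) : dot z (- x) = - dot z x.
Proof. by rewrite dotC dotNl dotC. Qed.

Lemma dot_mulmx m p (x : 'rV[R]_m) (A : 'M[R]_(m, p)) (y : 'rV[R]_p) :
  dot (x *m A) y = dot x (y *m A^T).
Proof. by rewrite /dot trmx_mul trmxK mulmxA. Qed.

Lemma sqn_ge0 m (x : 'rV[R]_m) : 0 <= sqn x.
Proof. by apply: sumr_ge0 => j _; rewrite sqr_ge0. Qed.

Lemma sqn_gt0 m (x : 'rV[R]_m) : x != 0 -> 0 < sqn x.
Proof.
move=> xn0; rewrite lt_def sqn_ge0 andbT; apply: contra xn0 => /eqP s0.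
apply/eqP/rowP => j; rewrite mxE; apply/eqP.
have : x 0 j ^+ 2 == 0.
  rewrite eq_le sqr_ge0 andbT -s0 /sqn (bigD1 j) //= lerDl.
  by apply: sumr_ge0 => i _; rewrite sqr_ge0.
by rewrite sqrf_eq0.
Qed.

Lemma sqnZ m a (x : 'rV[R]_m) : sqn (a *: x) = a ^+ 2 * sqn x.
Proof. by rewrite !sqn_dot dotZl dotZr mulrA expr2. Qed.

Lemma sqnN m (x : 'rV[R]_m) : sqn (- x) = sqn x.
Proof. by rewrite !sqn_dot dotNl dotNr opprK. Qed.

Lemma sqnD m (x y : 'rV[R]_m) : sqn (x + y) = sqn x + 2 * dot x y + sqn y.
Proof.
rewrite !sqn_dot dotDl !dotDr (dotC y x); ring.
Qed.

Lemma young m (x y : 'rV[R]_m) a : 0 < a ->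
  2 * dot x y <= a * sqn x + sqn y / a.
Proof.
move=> a0.
have := sqn_ge0 (a *: x - y).
rewrite sqnD sqnZ sqnN dotNr dotZl => h.
rewrite -(ler_pM2l a0) mulrDr (mulrCA a (sqn y)) mulfV ?gt_eqF // mulr1.
rewrite expr2 in h; nra.
Qed.

Lemma sqnD2 m (x y : 'rV[R]_m) : sqn (x + y) <= 2 * sqn x + 2 * sqn y.
Proof.
rewrite sqnD; have := young x y (@ltr01 R); rewrite mul1r divr1; lra.
Qed.

Lemma dot_young_sq m (w z : 'rV[R]_m) c : 0 < c ->
  c * sqn z <= dot w z -> c ^+ 2 * sqn z <= sqn w.
Proof.
move=> c0 h; have := young z w c0; rewrite dotC => hy.
have : c * (c * sqn z) <= c * (sqn w / c) by rewrite ler_pM2l //; lra.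
by rewrite mulrA -expr2 mulrCA mulfV ?gt_eqF // mulr1.
Qed.


Lemma sqn_mxvec p q (A : 'M[R]_(p, q)) : sqn (mxvec A) = \sum_(k < p) sqn (row k A).
Proof.
rewrite /sqn (reindex _ (curry_mxvec_bij _ _)) /= pair_bigA /=.
apply: eq_bigr => [[i j]] _ /=; by rewrite mxvecE mxE.
Qed.

Lemma sqn_entry m (x : 'rV[R]_m) i : x 0 i ^+ 2 <= sqn x.
Proof.
rewrite /sqn (bigD1 i) //= lerDl; by apply: sumr_ge0 => j _; rewrite sqr_ge0.
Qed.

Definition Kb m (A : 'M[R]_m) : R := \sum_i \sum_j `|A i j|.

Lemma Kb_ge0 m (A : 'M[R]_m) : 0 <= Kb A.
Proof. by apply: sumr_ge0 => i _; apply: sumr_ge0 => j _. Qed.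

Lemma qf_expand m (A : 'M[R]_m) x :
  dot (x *m A) x = \sum_i \sum_j x 0 i * A i j * x 0 j.
Proof.
rewrite dotE exchange_big /=; apply: eq_bigr => j _.
by rewrite mxE mulr_suml.
Qed.

Lemma qf_bound m (A : 'M[R]_m) x : `|dot (x *m A) x| <= Kb A * sqn x.
Proof.
rewrite qf_expand /Kb mulr_suml.
apply: (le_trans (ler_norm_sum _ _ _)); apply: ler_sum => i _.
rewrite mulr_suml.
apply: (le_trans (ler_norm_sum _ _ _)); apply: ler_sum => j _.
rewrite (mulrC (x 0 i)) -mulrA normrM; apply: ler_wpM2l => //.
have hi := sqn_entry x i; have hj := sqn_entry x j.
rewrite normrM.
have : 2 * (`|x 0 i| * `|x 0 j|) <= `|x 0 i| ^+ 2 + `|x 0 j| ^+ 2.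
  have := sqr_ge0 (`|x 0 i| - `|x 0 j|); rewrite sqrrB; lra.
rewrite !real_normK ?num_real //; lra.
Qed.

Lemma qf_lower m (A : 'M[R]_m) x : - (Kb A * sqn x) <= dot (x *m A) x.
Proof. by have := qf_bound A x; rewrite ler_norml => /andP[]. Qed.

Lemma qf_upper m (A : 'M[R]_m) x : dot (x *m A) x <= Kb A * sqn x.
Proof. by have := qf_bound A x; rewrite ler_norml => /andP[]. Qed.

Lemma sqn_mul_bound m p (A : 'M[R]_(m, p)) x :
  sqn (x *m A) <= Kb (A *m A^T) * sqn x.
Proof.
rewrite sqn_dot dot_mulmx dotC -mulmxA; exact: qf_upper.
Qed.

Lemma quad_disc (a b c : R) : (forall t, 0 <= a + 2 * t * b + t ^+ 2 * c) ->
  b ^+ 2 <= a * c.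
Proof.
move=> h; have a0 : 0 <= a by have := h 0; rewrite mulr0 !mul0r expr0n /= mul0r !addr0.
have [c0|] := ltrP 0 c.
  have := h (- b / c).
  have -> : a + 2 * (- b / c) * b + (- b / c) ^+ 2 * c = a - b ^+ 2 / c.
    by field; rewrite gt_eqF.
  rewrite subr_ge0 ler_pdivrMr // mulrC => hb; exact: hb.
move=> cle0.
have c0 : c = 0.
  apply/eqP; rewrite eq_le cle0 /=; rewrite leNgt; apply/negP => cneg.
  have hs : forall t, 0 <= a + t ^+ 2 * c.
    move=> t; have h1 := h t; have h2 := h (- t).
    rewrite sqrrN mulrN mulNr in h2; lra.
  pose t := a / (- c) + 1.
  have nc : 0 < - c by rewrite oppr_gt0.
  have t1 : 1 <= t by rewrite /t lerDr divr_ge0 // ltW.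
  have tt : t <= t ^+ 2 by rewrite expr2 ler_peMl // (le_trans ler01 t1).
  have tc : t * (- c) = a + (- c) by rewrite /t mulrDl mul1r mulfVK ?gt_eqF.
  have := hs t.
  have : t * (- c) <= t ^+ 2 * (- c) by rewrite ler_pM2r.
  lra.
subst c; have [->|bn0] := eqVneq b 0; first by rewrite expr0n mulr0.
have := h (- (a + 1) / (2 * b)).
have -> : a + 2 * (- (a + 1) / (2 * b)) * b + (- (a + 1) / (2 * b)) ^+ 2 * 0 = -1.
  by field.
by rewrite ler0N1.
Qed.

Lemma psd_cs m (B : 'M[R]_m) : B^T = B -> (forall x, 0 <= dot (x *m B) x) ->
  forall x y, dot (x *m B) y ^+ 2 <= dot (x *m B) x * dot (y *m B) y.
Proof.
move=> BT psd x y; apply: quad_disc => t.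
have := psd (x + t *: y).
rewrite mulmxDl -scalemxAl dotDl !dotDr dotZl !dotZr.
have -> : dot (y *m B) x = dot (x *m B) y by rewrite dot_mulmx BT dotC.
rewrite dotZl mulrA -expr2 => h; lra.
Qed.


Lemma sqn0 m : sqn (0 : 'rV[R]_m) = 0.
Proof. by rewrite /sqn big1 // => j _; rewrite mxE expr0n. Qed.

Lemma dot0l m (x : 'rV[R]_m) : dot 0 x = 0.
Proof. by rewrite /dot mul0mx mxE. Qed.

Lemma ker_nz m p (A : 'M[R]_(m, p)) : kermx A != 0 -> exists2 v : 'rV_m, v != 0 & v *m A = 0.
Proof.
move=> kn0.
have : [exists i, row i (kermx A) != 0].
  apply: contraR kn0 => /existsPn h; apply/eqP/row_matrixP => i.
  by rewrite row0; apply/eqP; apply: negbNE; exact: h.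
case/existsP => i hi; exists (row i (kermx A)) => //.
by rewrite -row_mul mulmx_ker row0.
Qed.

Lemma sym_eig m (A : 'M[R]_m) : (0 < m)%N -> A^T = A ->
  exists r, eigenvalue A r /\ forall x, r * sqn x <= dot (x *m A) x.
Proof.
move=> m0 AT.
pose S := [set y : R | exists2 x : 'rV_m, x != 0 & y = dot (x *m A) x / sqn x].
pose e0 : 'rV[R]_m := delta_mx 0 (Ordinal m0).
have e0n0 : e0 != 0.
  apply/eqP => /matrixP/(_ 0 (Ordinal m0)); rewrite !mxE eqxx /= => /eqP.
  by rewrite oner_eq0.
have S0 : S !=set0 by exists (dot (e0 *m A) e0 / sqn e0); exists e0.
have Slb : lbound S (- Kb A).
  move=> y [x xn0 ->]; rewrite ler_pdivlMr ?sqn_gt0 // mulNr; exact: qf_lower.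
pose r := inf S.
have hr : forall x, r * sqn x <= dot (x *m A) x.
  move=> x; have [->|xn0] := eqVneq x 0; first by rewrite sqn0 mul0mx dot0l mulr0.
  have : r <= dot (x *m A) x / sqn x.
    by apply: (ge_inf (ex_intro _ _ Slb)); exists x.
  by rewrite ler_pdivlMr ?sqn_gt0.
exists r; split => //.
pose B := A - r%:M.
have qB : forall x, dot (x *m B) x = dot (x *m A) x - r * sqn x.
  by move=> x; rewrite /B mulmxBr mul_mx_scalar dotDl dotNl dotZl sqn_dot.
have psdB : forall x, 0 <= dot (x *m B) x by move=> x; rewrite qB subr_ge0.
have BT : B^T = B by rewrite /B linearB /= AT tr_scalar_mx.
have nunit : ~~ (B \in unitmx).
  apply/negP => Bu.
  pose C := invmx B.
  pose K1 := Kb (C *m C^T) + 1; pose K2 := Kb B + 1.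
  have K10 : 1 <= K1 by rewrite /K1 lerDr Kb_ge0.
  have K20 : 1 <= K2 by rewrite /K2 lerDr Kb_ge0.
  have key : forall x, x != 0 -> sqn x <= K1 * K2 * dot (x *m B) x.
    move=> x xn0.
    set s := sqn (x *m B); set q := dot (x *m B) x.
    have q0 : 0 <= q := psdB x.
    have h1 : sqn x <= (K1 - 1) * s.
      have -> : sqn x = sqn ((x *m B) *m C) by rewrite -mulmxA mulmxV // mulmx1.
      by rewrite /K1 addrK; apply: sqn_mul_bound.
    have sx := sqn_gt0 xn0.
    have s0 : 0 < s.
      rewrite lt_def sqn_ge0 andbT; apply/eqP => s0; move: h1; rewrite s0 mulr0; lra.
    have cs := psd_cs BT psdB x (x *m B).
    rewrite -sqn_dot -/s in cs.
    have h2 : dot (x *m B *m B) (x *m B) <= (K2 - 1) * s.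
      by rewrite /K2 addrK; apply: qf_upper.
    have h3 : s ^+ 2 <= q * ((K2 - 1) * s).
      apply: (le_trans cs); rewrite -/q; apply: ler_wpM2l => //.
    have h4 : s <= q * (K2 - 1).
      by move: h3; rewrite mulrA expr2 ler_pM2r.
    have h5 : (K1 - 1) * s <= K1 * s by rewrite ler_pM2r // gerBl.
    have h6 : K1 * s <= K1 * (q * K2).
      rewrite ler_pM2l ?(lt_le_trans ltr01) //.
      apply: (le_trans h4); rewrite ler_wpM2l // gerBl //.
    by rewrite -mulrA (mulrC K2); lra.
  have K0 : 0 < K1 * K2 by rewrite mulr_gt0 // (lt_le_trans ltr01).
  have lb2 : lbound S (r + 1 / (K1 * K2)).
    move=> y [x xn0 ->].
    have sx := sqn_gt0 xn0.
    rewrite ler_pdivlMr // mulrDl.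
    have := key x xn0; rewrite qB.
    rewrite -ler_pdivrMl // => hk.
    have -> : 1 / (K1 * K2) * sqn x = (K1 * K2)^-1 * sqn x by rewrite div1r.
    lra.
  have := lb_le_inf S0 lb2; rewrite -/r.
  have : 0 < 1 / (K1 * K2) by rewrite divr_gt0.
  lra.
have kn0 : kermx B != 0 by rewrite kermx_eq0 row_free_unit.
have [v vn0 vB] := ker_nz kn0.
apply/eigenvalueP; exists v => //.
move: vB; rewrite /B mulmxBr mul_mx_scalar => /eqP; rewrite subr_eq0 => /eqP //.
Qed.

Lemma tr_bound m (A : 'M[R]_m) c : 0 < c ->
  (forall x, c * sqn x <= sqn (x *m A)) -> forall x, c * sqn x <= sqn (x *m A^T).
Proof.
move=> c0 hA.
have Au : A \in unitmx.
  rewrite -row_free_unit -kermx_eq0; apply/negPn/negP => kn0.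
  have [v vn0 vA] := ker_nz kn0.
  have := hA v; rewrite vA sqn0.
  have := sqn_gt0 vn0; move=> h1 h2.
  have : 0 < c * sqn v by rewrite mulr_gt0.
  lra.
move=> x.
pose Bi := invmx A; pose z := x *m Bi; pose y := x *m A^T.
have zA : z *m A = x by rewrite /z -mulmxA mulVmx // mulmx1.
have yB : y *m Bi^T = x by rewrite /y -mulmxA -trmx_mul mulVmx // trmx1 mulmx1.
have e : sqn x = dot y z by rewrite sqn_dot -{1}yB dot_mulmx trmxK.
have hz := hA z; rewrite zA in hz.
have hy : 2 * dot y z <= c^-1 * sqn y + sqn z / c^-1 by apply: young; rewrite invr_gt0.
rewrite -e invrK in hy.
have : sqn x <= c^-1 * sqn y by lra.
move=> h; have := ler_wpM2l (ltW c0) h.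
by rewrite mulrA divff ?gt_eqF // mul1r.
Qed.

Lemma eig_lb m (A : 'M[R]_m) c l : (forall x, c * sqn x <= sqn (x *m A^T)) ->
  eigenvalue (A^T *m A) l -> c <= l.
Proof.
move=> hA /eigenvalueP [w hw wn0].
have sw := sqn_gt0 wn0.
have e : l * sqn w = sqn (w *m A^T).
  by rewrite sqn_dot -dotZl -hw mulmxA dot_mulmx -sqn_dot.
have := hA w; rewrite -e => h.
by rewrite -(ler_pM2r sw).
Qed.

Lemma sigma_lb m (A : 'M[R]_m) c : (0 < m)%N ->
  (forall x, c * sqn x <= sqn (x *m A^T)) -> Num.sqrt c <= sigma_min A.
Proof.
move=> m0 hA; rewrite /sigma_min; apply: ler_wsqrtr.
have ATA : (A^T *m A)^T = A^T *m A by rewrite trmx_mul trmxK.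
have [r [er _]] := sym_eig m0 ATA.
apply: lb_le_inf; first by exists r.
by move=> l hl; apply: eig_lb hA hl.
Qed.

Lemma sigma_M n (M : 'M[R]_n) : (0 < n)%N -> sym_posdef M ->
  exists lam, 0 < lam /\ (forall x, lam * sqn x <= dot (x *m M) x) /\ sigma_min M <= lam.
Proof.
move=> n0 [MT pd].
have [r [er hr]] := sym_eig n0 MT.
have [v vM vn0] := eigenvalueP er.
have r0 : 0 < r.
  have := pd v vn0; rewrite /qM -/(dot _ _) vM dotZl -sqn_dot => h.
  by move: h; rewrite pmulr_lgt0 // sqn_gt0.
exists r; split => //; split => //.
rewrite /sigma_min.
have -> : r = Num.sqrt (r ^+ 2) by rewrite sqrtr_sqr gtr0_norm.
apply: ler_wsqrtr.
apply: (ge_inf); last first.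
  apply/eigenvalueP; exists v => //.
  by rewrite mulmxA MT vM -scalemxAl vM scalerA expr2.
exists 0 => l hl; apply: (@eig_lb n M 0 l) => // x; rewrite mul0r; exact: sqn_ge0.
Qed.

Lemma lin_mat m p (f : 'rV[R]_m -> 'rV[R]_p) :
  (forall h x y, f (h *: x + y) = h *: f x + f y) ->
  forall x, x *m (\matrix_(b, a) f (delta_mx 0 b) 0 a) = f x.
Proof.
move=> hl.
have f0 : f 0 = 0.
  have := hl 1 0 0; rewrite scaler0 add0r scale1r => h.
  by apply: (@addrI _ (f 0)); rewrite addr0 -h.
move=> x.
have -> : f x = \sum_b x 0 b *: f (delta_mx 0 b).
  rewrite {1}(row_sum_delta x).
  elim/big_rec2: _ => [|b y1 y2 _ IH] //.
  by rewrite hl IH.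
apply/rowP => a; rewrite !mxE summxE; apply: eq_bigr => b _; by rewrite !mxE.
Qed.

End LA.


Section AN.
Variable R : realType.

Lemma der_affine m (f : 'rV[R]_m -> R) a v (A B : R) :
  (forall h : R, h != 0 -> h^-1 *: (f (h *: v + a) - f a) = A + h * B) ->
  derivable f a v /\ derive f a v = A.
Proof.
move=> hf.
have cg : (fun h : R => A + h * B) @ (0 : R)^' --> A.
  have : {for (0 : R), continuous (fun h : R => A + h * B)}.
    apply: cvgD; first exact: cvg_cst.
    by apply: cvgMr_tmp; exact: cvg_id.
  by move/continuous_withinNx; rewrite mul0r addr0.
have cq : (fun h => h^-1 *: ((f \o shift a) (h *: v) - f a)) @ (0 : R)^' --> A.
  apply: cvg_trans cg; apply: near_eq_cvg; near=> h.
  rewrite /= hf //; near: h; exact: nbhs_dnbhs_neq.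
split; first by apply/cvg_ex; exists A.
exact: cvg_lim cq.
Unshelve. all: by end_near. Qed.


Lemma cvg_sumR (T : Type) (F : set_system T) (FF : Filter F) p
  (f : 'I_p -> T -> R) (l : 'I_p -> R) :
  (forall i, f i x @[x --> F] --> l i) ->
  (fun x => \sum_i f i x) @ F --> \sum_i l i.
Proof.
move=> hf.
have -> : (fun x => \sum_i f i x) = \sum_i f i by rewrite fct_sumE.
apply: (big_ind2 (fun (g : T -> R) (v : R) => g @ F --> v)) => //.
- exact: cvg_cst.
- by move=> g1 v1 g2 v2 h1 h2; apply: cvgD.
Qed.

Lemma deltaPhi m p (Phi : 'M[R]_(m, p)) b a : ((delta_mx 0 b : 'rV_m) *m Phi) 0 a = Phi b a.
Proof. by rewrite -rowE mxE. Qed.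

Lemma jac_Phi m p (F : 'rV[R]_m -> 'rV[R]_p) x (Phi : 'M[R]_(m, p)) :
  (forall a e, derive (fun y => F y 0 a) x e = (e *m Phi) 0 a) -> jac F x = Phi^T.
Proof. by move=> h; apply/matrixP => a b; rewrite !mxE h deltaPhi. Qed.

Lemma grad_hsqn m p (F : 'rV[R]_m -> 'rV[R]_p) x (Phi : 'M[R]_(m, p)) :
  (forall a e, derivable (fun y => F y 0 a) x e) ->
  (forall a e, derive (fun y => F y 0 a) x e = (e *m Phi) 0 a) ->
  grad (fun y => 1/2 * sqn (F y)) x = F x *m Phi^T.
Proof.
move=> hd hD; apply/rowP => b; rewrite !mxE.
set e := delta_mx 0 b.
have -> : (fun y => 1/2 * sqn (F y)) =
    (1/2 : R) \*: \sum_(a < p) ((fun y => F y 0 a) * (fun y => F y 0 a)).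
  apply/funext => y; rewrite /= fct_sumE /sqn; congr (_ * _).
have hs : forall a, derivable ((fun y => F y 0 a) * (fun y => F y 0 a)) x e.
  by move=> a; apply: derivableM.
rewrite deriveZ; last exact: derivable_sum.
rewrite derive_sum // scaler_sumr; apply: eq_bigr => a _.
rewrite deriveM ?hd // hD deltaPhi !mxE /=.
rewrite /GRing.scale /=; lra.
Qed.


Lemma lip_sq m p (g : 'rV[R]_m -> 'rV[R]_p) L :
  (forall x x', enorm (g x - g x') <= L * enorm (x - x')) ->
  forall x x', sqn (g x - g x') <= L ^+ 2 * sqn (x - x').
Proof.
move=> lip x x'; have h := lip x x'; rewrite /enorm in h.
have h0 : 0 <= Num.sqrt (sqn (g x - g x')) := sqrtr_ge0 _.
have := ler_pM h0 h0 h h.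
have e1 := sqr_sqrtr (sqn_ge0 (g x - g x')).
have e2 := sqr_sqrtr (sqn_ge0 (x - x')).
rewrite expr2 in e1; rewrite expr2 in e2.
rewrite e1 mulrACA e2 => h1; apply: (le_trans h1).
by rewrite expr2.
Qed.

Lemma lip_jac m (g : 'rV[R]_m -> 'rV[R]_m) t L :
  differentiable g t ->
  (forall x x', enorm (g x - g x') <= L * enorm (x - x')) ->
  forall x, sqn (x *m 'J g t) <= L ^+ 2 * sqn x.
Proof.
move=> dg lip x.
have lip2 := lip_sq lip.
rewrite -deriveEjacobian //.
set w := 'D_x g t.
have dv : derivable g t x by apply: diff_derivable.
have hw : forall l, w 0 l = 'D_x (fun y => g y 0 l) t.
  by move=> l; rewrite /w derive_mx // mxE.
have cl : forall l, (fun h : R => h^-1 *: (((fun y => g y 0 l) \o shift t) (h *: x) - g t 0 l))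
    @ (0 : R)^' --> w 0 l.
  by move=> l; rewrite hw; exact: ((derivable_mxP _ _ _).1 dv 0 l).
pose q := fun (l : 'I_m) (h : R) => h^-1 *: (((fun y => g y 0 l) \o shift t) (h *: x) - g t 0 l).
have cs : (fun h => \sum_l q l h ^+ 2) @ (0 : R)^' --> sqn w.
  have -> : (fun h => \sum_l q l h ^+ 2) = (fun h => \sum_l ((q l) \* (q l)) h).
    by apply/funext => h; apply: eq_bigr => l _; rewrite expr2.
  have -> : sqn w = \sum_l w 0 l * w 0 l by apply: eq_bigr => l _; rewrite expr2.
  apply: cvg_sumR => l; exact: cvgM (cl l) (cl l).
have nb : \forall h \near (0 : R)^', \sum_l q l h ^+ 2 <= L ^+ 2 * sqn x.
  near=> h.
  have hn0 : h != 0 by near: h; exact: nbhs_dnbhs_neq.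
  have -> : \sum_l q l h ^+ 2 = sqn (h^-1 *: (g (h *: x + t) - g t)).
    by rewrite /sqn; apply: eq_bigr => l _; rewrite /q !mxE.
  rewrite sqnZ.
  have := lip2 (h *: x + t) t; rewrite addrK sqnZ => hl.
  have : h^-1 ^+ 2 * sqn (g (h *: x + t) - g t) <= h^-1 ^+ 2 * (L ^+ 2 * (h ^+ 2 * sqn x)).
    by apply: ler_wpM2l => //; rewrite sqr_ge0.
  move=> h2; apply: (le_trans h2).
  have -> : h^-1 ^+ 2 * (L ^+ 2 * (h ^+ 2 * sqn x)) = L ^+ 2 * sqn x by field.
  by [].
have cv := cvgP _ cs.
pose proof (limr_le cv nb) as HH; move: HH.
have e := cvg_lim _ cs. by rewrite e.
Unshelve. all: by end_near. Qed.

End AN.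


Section PB1.
Variable R : realType.

Lemma dot_delta m (x : 'rV[R]_m) j : dot x (delta_mx 0 j) = x 0 j.
Proof. by rewrite /dot trmx_delta -colE mxE. Qed.

Lemma row_setrow N n (Th : 'M[R]_(N, n)) k t : row k (setrow Th k t) = t.
Proof. by apply/rowP => j; rewrite !mxE eqxx. Qed.

Lemma row_setrow_neq N n (Th : 'M[R]_(N, n)) k t i : i != k ->
  row i (setrow Th k t) = row i Th.
Proof. by move=> ik; apply/rowP => j; rewrite !mxE (negbTE ik). Qed.

Lemma thext_setrow N n (th0 thm1 : 'rV[R]_n) (Th : 'M[R]_(N, n)) (k : 'I_N) t m :
  (m <= k.+1)%N -> thext th0 thm1 (setrow Th k t) m = thext th0 thm1 Th m.
Proof.
case: m => [|[|m]] //= mk.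
case: insubP => [i _ iv|] //=.
rewrite row_setrow_neq //; apply/eqP => ik; by move: mk; rewrite -iv ik ltnS ltnn.
Qed.

Lemma thext_ord N n (th0 thm1 : 'rV[R]_n) (Th : 'M[R]_(N, n)) (k : 'I_N) :
  thext th0 thm1 Th (val k).+2 = row k Th.
Proof.
rewrite /=; case: insubP => [i _ /val_inj -> //|]; by rewrite ltn_ord.
Qed.

Lemma thext_lin N n (th0 thm1 : 'rV[R]_n) (A B : 'M[R]_(N, n)) h m :
  thext th0 thm1 (h *: A + B) m = h *: thext 0 0 A m + thext th0 thm1 B m.
Proof.
case: m => [|[|m]] /=; rewrite ?scaler0 ?add0r //.
case: insubP => [i _ _|] /=; last by rewrite scaler0 addr0.
by apply/rowP => j; rewrite !mxE.
Qed.

Lemma thext0 N n (A : 'M[R]_(N, n)) m : thext 0 0 (- A) m = - thext 0 0 A m.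
Proof.
case: m => [|[|m]] /=; rewrite ?oppr0 //.
case: insubP => [i _ _|] /=; last by rewrite oppr0.
by apply/rowP => j; rewrite !mxE.
Qed.

Lemma der_quad n (M : 'M[R]_n) (b t e : 'rV[R]_n) : M^T = M ->
  derivable (fun s => qM M (s + b)) t e /\
  derive (fun s => qM M (s + b)) t e = 2 * dot ((t + b) *m M) e.
Proof.
move=> MT; apply: (der_affine (B := dot (e *m M) e)) => h hn0.
rewrite /qM -/(dot _ _) -/(dot _ _).
have -> : h *: e + t + b = (t + b) + h *: e by rewrite -addrA addrC.
move: (t + b) => z.
rewrite mulmxDl dotDl !dotDr -scalemxAl !dotZl !dotZr.
have -> : dot (e *m M) z = dot (z *m M) e by rewrite dot_mulmx MT dotC.
rewrite /GRing.scale /=.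
by field.
Qed.

Lemma der_comb m p q (A : 'rV[R]_m -> R) (Aff : 'rV[R]_m -> 'rV[R]_p)
  (g : 'rV[R]_p -> 'rV[R]_q) (j : 'I_q) x e (cA : R) (d : 'rV[R]_p) :
  (forall h : R, h != 0 -> h^-1 *: (A (h *: e + x) - A x) = cA) ->
  (forall h : R, Aff (h *: e + x) = h *: d + Aff x) ->
  differentiable g (Aff x) ->
  derivable (fun y => A y + g (Aff y) 0 j) x e /\
  derive (fun y => A y + g (Aff y) 0 j) x e = cA + (d *m 'J g (Aff x)) 0 j.
Proof.
move=> hA hAff dg.
have [dA DA] : derivable A x e /\ derive A x e = cA.
  by apply: (der_affine (B := 0)) => h hn0; rewrite mulr0 addr0 hA.
have dgd : derivable g (Aff x) d by apply: diff_derivable.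
have eqq : (fun h : R => h^-1 *: (((fun y => g (Aff y) 0 j) \o shift x) (h *: e)
      - g (Aff x) 0 j)) =
    (fun h : R => h^-1 *: (((fun y => g y 0 j) \o shift (Aff x)) (h *: d) - g (Aff x) 0 j)).
  by apply/funext => h /=; rewrite hAff.
have dG : derivable (fun y => g (Aff y) 0 j) x e.
  rewrite /derivable eqq; exact: ((derivable_mxP _ _ _).1 dgd 0 j).
have DG : derive (fun y => g (Aff y) 0 j) x e = (d *m 'J g (Aff x)) 0 j.
  rewrite /derive eqq -/(derive (fun y => g y 0 j) (Aff x) d).
  by rewrite -deriveEjacobian // derive_mx // mxE.
have -> : (fun y => A y + g (Aff y) 0 j) = A + (fun y => g (Aff y) 0 j) by [].
split; first exact: derivableD.
by rewrite deriveD // DA DG.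
Qed.

End PB1.


Section PB2.
Variables (R : realType) (U : Type) (n N : nat) (M : 'M[R]_n) (del : nat -> R)
  (th0 thm1 : 'rV[R]_n) (P : 'rV[R]_n -> U -> R) (iota : 'I_N -> 'I_N).

Definition rho k := del k.+1 / del k.
Definition bv (a b : 'rV[R]_n) (A : 'M[R]_(N, n)) k :=
  - ((1 + rho k) *: thext a b A k.+1) + rho k *: thext a b A k.
Definition gP (a : U) := grad (fun x => P x a).
Definition dinv k := (del k.+1 ^+ 2)^-1.

Lemma bv_lin a b (A B : 'M[R]_(N, n)) h k :
  bv a b (h *: A + B) k = h *: bv 0 0 A k + bv a b B k.
Proof. by rewrite /bv !thext_lin; apply/rowP => j; rewrite !mxE; ring. Qed.

Lemma bv_setrow (Th : 'M[R]_(N, n)) (k : 'I_N) t :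
  bv th0 thm1 (setrow Th k t) k = bv th0 thm1 Th k.
Proof. by rewrite /bv !thext_setrow. Qed.

Lemma Ebar_expr u k Th : Ebar M del th0 thm1 P u iota k Th =
  1 / (2 * del k.+1 ^+ 2) * qM M (row k Th + bv th0 thm1 Th k) + P (row k Th) (u (iota k)).
Proof. by rewrite /Ebar /bv /rho /= addrA. Qed.

Lemma dEbar_expr (MT : M^T = M)
  (hdiff : forall a x, differentiable (fun y => P y a) x) u k Th :
  dEbar M del th0 thm1 P u iota k Th =
  dinv k *: ((row k Th + bv th0 thm1 Th k) *m M) + gP (u (iota k)) (row k Th).
Proof.
apply/rowP => j; rewrite /dEbar /grad mxE [RHS]mxE.
have -> : (fun t => Ebar M del th0 thm1 P u iota k (setrow Th k t)) =
  (1 / (2 * del k.+1 ^+ 2)) \*: (fun s => qM M (s + bv th0 thm1 Th k)) +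
  (fun s => P s (u (iota k))).
  by apply/funext => t; rewrite Ebar_expr row_setrow bv_setrow.
have [dq Dq] := der_quad (bv th0 thm1 Th k) (row k Th) (delta_mx 0 j) MT.
rewrite deriveD; [|exact: derivableZ|exact: diff_derivable].
rewrite deriveZ // Dq dot_delta /gP /grad !mxE.
congr (_ + _); rewrite /dinv /GRing.scale /= div1r invfM.
by move: (del k.+1 ^+ 2)^-1 => c; field.
Qed.


Lemma Gi_comp (MT : M^T = M)
  (hdiff : forall a x, differentiable (fun y => P y a) x)
  (hdg : forall a x, differentiable (gP a) x) u k Th t :
  (forall l e, derivable (fun y => dEbar M del th0 thm1 P u iota k (setrow Th k y) 0 l) t e) /\
  (forall l e, derive (fun y => dEbar M del th0 thm1 P u iota k (setrow Th k y) 0 l) t e =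
    (e *m (dinv k *: M + 'J (gP (u (iota k))) t)) 0 l).
Proof.
suff H : forall l e, derivable (fun y => dEbar M del th0 thm1 P u iota k (setrow Th k y) 0 l) t e /\
  derive (fun y => dEbar M del th0 thm1 P u iota k (setrow Th k y) 0 l) t e =
    (e *m (dinv k *: M + 'J (gP (u (iota k))) t)) 0 l.
  by split => l e; case: (H l e).
move=> l e.
have -> : (fun y => dEbar M del th0 thm1 P u iota k (setrow Th k y) 0 l) =
    (fun y => dinv k * ((y + bv th0 thm1 Th k) *m M) 0 l + gP (u (iota k)) (id y) 0 l).
  by apply/funext => y; rewrite dEbar_expr // row_setrow bv_setrow !mxE.
have := @der_comb _ _ _ _ (fun y => dinv k * ((y + bv th0 thm1 Th k) *m M) 0 l) id
  (gP (u (iota k))) l t e (dinv k * (e *m M) 0 l) e _ _ (hdg _ t).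
case.
- move=> h hn0 /=.
  rewrite -addrA mulmxDl -scalemxAl.
  move: (e *m M) ((t + bv th0 thm1 Th k) *m M) (dinv k) => E T c.
  rewrite !mxE /GRing.scale /=; by field.
- by [].
move=> d D; split => //; rewrite D mulmxDr -scalemxAr.
by rewrite [RHS]mxE [in RHS]mxE.
Qed.

Lemma PhiBound (L lam c : R) (a : U) t z : 0 < L -> 0 <= c ->
  (forall x, lam * sqn x <= dot (x *m M) x) -> differentiable (gP a) t ->
  gradient_continuous L (fun x => P x a) ->
  (c * lam - L) * sqn z <= dot (z *m (c *: M + 'J (gP a) t)) z.
Proof.
move=> L0 c0 hlam hd hl.
have L0' : L != 0 by rewrite gt_eqF.
rewrite mulmxDr dotDl -scalemxAr dotZl.
have h1 : c * (lam * sqn z) <= c * dot (z *m M) z by apply: ler_wpM2l.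
set w := z *m 'J (gP a) t.
have hw : sqn w <= L ^+ 2 * sqn z := lip_jac hd hl z.
have hy : 2 * dot (- w) z <= L^-1 * sqn (- w) + sqn z / L^-1.
  by apply: young; rewrite invr_gt0.
rewrite sqnN dotNl invrK in hy.
have h2 : L^-1 * sqn w <= L^-1 * (L ^+ 2 * sqn z) by apply: ler_wpM2l => //; rewrite invr_ge0 ltW.
have e : L^-1 * (L ^+ 2 * sqn z) = L * sqn z by field.
rewrite e in h2.
rewrite mulrBl -mulrA; lra.
Qed.

Lemma PL_core2 m p (g : 'rV[R]_m -> 'rV[R]_p) c : 0 < c ->
  (forall t, c * sqn (g t) <= sqn (grad (fun y => 1/2 * sqn (g y)) t)) ->
  PL (fun y => 1/2 * sqn (g y)).
Proof.
move=> c0 h; exists c => // x.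
have inf0 : 0 <= inf (range (fun y => 1/2 * sqn (g y))).
  apply: lb_le_inf; first by exists (1/2 * sqn (g x)); exists x.
  move=> _ [y _ <-]; apply: mulr_ge0 => //; exact: sqn_ge0.
have := h x; have := sqn_ge0 (g x).
set s := sqn (g x); set G := sqn _; set i := inf _.
move=> s0 hs.
have : c * i >= 0 by apply: mulr_ge0 => //; exact: ltW.
rewrite mulrBr; lra.
Qed.


Lemma dinv_ge0 k : 0 <= dinv k.
Proof. by rewrite /dinv invr_ge0 sqr_ge0. Qed.

Lemma part_i (MT : M^T = M)
  (hdiff : forall a x, differentiable (fun y => P y a) x)
  (hdg : forall a x, differentiable (gP a) x) (L : R) (L0 : 0 < L)
  (hlip : forall a, gradient_continuous L (fun x => P x a))
  lam (hlam : forall x, lam * sqn x <= dot (x *m M) x) u (k : 'I_N) Th :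
  0 < lam * dinv k - L ->
  PL (fun t => Lambda_i M del th0 thm1 P u iota k (setrow Th k t)).
Proof.
move=> ck0; rewrite /Lambda_i.
apply: (PL_core2 (c := (lam * dinv k - L) ^+ 2)); first exact: exprn_gt0.
move=> t.
have [hd hD] := Gi_comp MT hdiff hdg u k Th t.
rewrite (grad_hsqn hd hD).
apply: dot_young_sq => //.
rewrite dot_mulmx trmxK dotC (mulrC lam).
apply: PhiBound => //; exact: dinv_ge0.
Qed.

Lemma row_lin (A B : 'M[R]_(N, n)) h (k : 'I_N) : row k (h *: A + B) = h *: row k A + row k B.
Proof. by apply/rowP => j; rewrite !mxE. Qed.

Lemma vec_mx_lin (x y : 'rV[R]_(N * n)) h : vec_mx (h *: x + y) = h *: vec_mx x + vec_mx y.
Proof. by apply/matrixP => i j; rewrite !mxE. Qed.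

Definition Tk (u' : 'I_N -> U) (v : 'rV[R]_(N * n)) (X : 'M[R]_(N, n)) (k : 'I_N) : 'rV[R]_n :=
  dinv k *: ((row k X + bv 0 0 X k) *m M) + row k X *m 'J (gP (u' (iota k))) (row k (vec_mx v)).

Definition Psi u' v (e : 'rV[R]_(N * n)) : 'rV[R]_(N * n) :=
  mxvec (\matrix_(k < N) Tk u' v (vec_mx e) k).

Lemma Tk_lin u' v A B h k : Tk u' v (h *: A + B) k = h *: Tk u' v A k + Tk u' v B k.
Proof.
rewrite /Tk row_lin bv_lin.
have -> : h *: row k A + row k B + (h *: bv 0 0 A k + bv 0 0 B k) =
    h *: (row k A + bv 0 0 A k) + (row k B + bv 0 0 B k).
  by apply/rowP => j; rewrite !mxE; ring.
move: (row k A + bv 0 0 A k) (row k B + bv 0 0 B k) => X Y.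
move: (row k A) (row k B) ('J (gP (u' (iota k))) (row k (vec_mx v))) (dinv k) => ZA ZB J c.
rewrite !mulmxDl -!scalemxAl.
move: (X *m M) (Y *m M) (ZA *m J) (ZB *m J) => a1 a2 a3 a4.
by apply/rowP => j; rewrite !mxE; ring.
Qed.

Lemma Psi_lin u' v h x y : Psi u' v (h *: x + y) = h *: Psi u' v x + Psi u' v y.
Proof.
rewrite /Psi vec_mx_lin.
have -> : \matrix_(k < N) Tk u' v (h *: vec_mx x + vec_mx y) k =
    h *: \matrix_(k < N) Tk u' v (vec_mx x) k + \matrix_(k < N) Tk u' v (vec_mx y) k.
  by apply/row_matrixP => k; rewrite row_lin !rowK Tk_lin.
by rewrite linearP.
Qed.

Lemma Gvec_comp (MT : M^T = M)
  (hdiff : forall a x, differentiable (fun y => P y a) x)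
  (hdg : forall a x, differentiable (gP a) x) u' v a e :
  derivable (fun y => Gvec M del th0 thm1 P u' iota y 0 a) v e /\
  derive (fun y => Gvec M del th0 thm1 P u' iota y 0 a) v e = Psi u' v e 0 a.
Proof.
case/mxvec_indexP: a => k j.
have -> : (fun y => Gvec M del th0 thm1 P u' iota y 0 (mxvec_index k j)) =
   (fun y => dinv k * ((row k (vec_mx y) + bv th0 thm1 (vec_mx y) k) *m M) 0 j
      + gP (u' (iota k)) (row k (vec_mx y)) 0 j).
  apply/funext => y; rewrite /Gvec mxvecE mxE dEbar_expr //.
  by rewrite [LHS]mxE [in LHS]mxE.
have := @der_comb _ _ _ _
  (fun y => dinv k * ((row k (vec_mx y) + bv th0 thm1 (vec_mx y) k) *m M) 0 j)
  (fun y => row k (vec_mx y)) (gP (u' (iota k))) j v e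
  (dinv k * ((row k (vec_mx e) + bv 0 0 (vec_mx e) k) *m M) 0 j) (row k (vec_mx e))
  _ _ (hdg _ _).
case.
- move=> h hn0 /=.
  rewrite vec_mx_lin row_lin bv_lin.
  have -> : h *: row k (vec_mx e) + row k (vec_mx v) + (h *: bv 0 0 (vec_mx e) k + bv th0 thm1 (vec_mx v) k) =
    h *: (row k (vec_mx e) + bv 0 0 (vec_mx e) k) + (row k (vec_mx v) + bv th0 thm1 (vec_mx v) k).
    by apply/rowP => i; rewrite !mxE; ring.
  move: (row k (vec_mx e) + bv 0 0 (vec_mx e) k) (row k (vec_mx v) + bv th0 thm1 (vec_mx v) k) => X Y.
  rewrite mulmxDl -scalemxAl.
  move: (X *m M) (Y *m M) (dinv k) => E T c.
  rewrite !mxE /GRing.scale /=; by field.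
- by move=> h; rewrite vec_mx_lin row_lin.
move=> d D; split => //; rewrite D /Psi mxvecE mxE /Tk.
by rewrite [RHS]mxE [in RHS]mxE.
Qed.

Definition PhiG u' v := \matrix_(b, a) Psi u' v (delta_mx 0 b) 0 a.

Lemma PhiG_mul u' v x : x *m PhiG u' v = Psi u' v x.
Proof. by apply: lin_mat => h x1 y1; exact: Psi_lin. Qed.

Lemma Lambda_eq u : Lambda M del th0 thm1 P u iota =
  (fun v => 1/2 * sqn (Gvec M del th0 thm1 P u iota v)).
Proof.
apply/funext => v; rewrite /Lambda /Gvec sqn_mxvec mulr_sumr.
by apply: eq_bigr => k _; rewrite rowK.
Qed.

Fixpoint Cum (c b : nat -> R) k := match k with
  | 0 => 0
  | k'.+1 => Cum c b k' + (2 + b k' * Cum c b k') / c k' ^+ 2 end.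

Definition bk k := 2 * dinv k ^+ 2 * Kb (M *m M^T) * (2 * (1 + rho k) ^+ 2 + 2 * rho k ^+ 2).

Lemma bk_ge0 k : 0 <= bk k.
Proof.
rewrite /bk; apply: mulr_ge0; last by apply: addr_ge0; apply: mulr_ge0 => //; exact: sqr_ge0.
apply: mulr_ge0; last exact: Kb_ge0.
by apply: mulr_ge0 => //; exact: sqr_ge0.
Qed.

Lemma Cum_ge0 c k : 0 <= Cum c bk k.
Proof.
elim: k => [|k IH] //=; apply: addr_ge0 => //; apply: divr_ge0; last exact: sqr_ge0.
by apply: addr_ge0 => //; apply: mulr_ge0 => //; exact: bk_ge0.
Qed.

Section Fwd.
Variable (X : 'M[R]_(N, n)).
Let Xn j := thext 0 0 X j.+2.
Let S k := \sum_(i < k) sqn (Xn i).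

Lemma S_ge0 k : 0 <= S k.
Proof. by apply: sumr_ge0 => i _; exact: sqn_ge0. Qed.

Lemma S_term j k : (j < k)%N -> sqn (Xn j) <= S k.
Proof.
move=> jk; rewrite /S (bigD1 (Ordinal jk)) //= lerDl.
by apply: sumr_ge0 => i _; exact: sqn_ge0.
Qed.

Lemma thext_S1 k : sqn (thext 0 0 X k.+1) <= S k.
Proof.
case: k => [|k]; first by rewrite /= sqn0; exact: S_ge0.
exact: S_term.
Qed.

Lemma thext_S2 k : sqn (thext 0 0 X k) <= S k.
Proof.
case: k => [|[|k]]; try by rewrite /= sqn0; exact: S_ge0.
exact: S_term.
Qed.

Lemma sqn_bv k : sqn (bv 0 0 X k) <= (2 * (1 + rho k) ^+ 2 + 2 * rho k ^+ 2) * S k.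
Proof.
rewrite /bv; apply: (le_trans (sqnD2 _ _)).
rewrite sqnN !sqnZ.
have h1 := thext_S1 k; have h2 := thext_S2 k.
have a1 : (1 + rho k) ^+ 2 * sqn (thext 0 0 X k.+1) <= (1 + rho k) ^+ 2 * S k.
  by apply: ler_wpM2l => //; exact: sqr_ge0.
have a2 : rho k ^+ 2 * sqn (thext 0 0 X k) <= rho k ^+ 2 * S k.
  by apply: ler_wpM2l => //; exact: sqr_ge0.
move: a1 a2; move: ((1 + rho k) ^+ 2) (rho k ^+ 2) (S k) => a b T a1 a2.
have -> : (2 * a + 2 * b) * T = 2 * (a * T) + 2 * (b * T) by ring.
lra.
Qed.

Lemma row_bound (MT : M^T = M)
  (hdg : forall a x, differentiable (gP a) x) (L : R) (L0 : 0 < L)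
  (hlip : forall a, gradient_continuous L (fun x => P x a))
  lam (hlam : forall x, lam * sqn x <= dot (x *m M) x) u' v (k : 'I_N) :
  0 < lam * dinv k - L ->
  (lam * dinv k - L) ^+ 2 * sqn (row k X) <= 2 * sqn (Tk u' v X k) + bk k * S k.
Proof.
move=> ck0.
set Phik := dinv k *: M + 'J (gP (u' (iota k))) (row k (vec_mx v)).
have eT : row k X *m Phik = Tk u' v X k - dinv k *: (bv 0 0 X k *m M).
  rewrite /Tk /Phik mulmxDl scalerDr mulmxDr scalemxAr.
  by rewrite addrAC addrK.
have h1 : (lam * dinv k - L) ^+ 2 * sqn (row k X) <= sqn (row k X *m Phik).
  apply: dot_young_sq => //; rewrite (mulrC lam).
  apply: PhiBound => //; exact: dinv_ge0.
apply: (le_trans h1); rewrite eT.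
apply: (le_trans (sqnD2 _ _)); rewrite sqnN sqnZ.
have h2 := sqn_mul_bound M (bv 0 0 X k).
have h3 := sqn_bv k.
have KM := Kb_ge0 (M *m M^T).
have d2 : 0 <= dinv k ^+ 2 by exact: sqr_ge0.
have h4 : dinv k ^+ 2 * sqn (bv 0 0 X k *m M) <= dinv k ^+ 2 * (Kb (M *m M^T) * sqn (bv 0 0 X k)).
  exact: ler_wpM2l.
have h5 : Kb (M *m M^T) * sqn (bv 0 0 X k) <=
    Kb (M *m M^T) * ((2 * (1 + rho k) ^+ 2 + 2 * rho k ^+ 2) * S k).
  exact: ler_wpM2l.
have h6 : dinv k ^+ 2 * (Kb (M *m M^T) * sqn (bv 0 0 X k)) <=
    dinv k ^+ 2 * (Kb (M *m M^T) * ((2 * (1 + rho k) ^+ 2 + 2 * rho k ^+ 2) * S k)).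
  exact: ler_wpM2l.
have -> : bk k * S k = 2 * (dinv k ^+ 2 * (Kb (M *m M^T) * ((2 * (1 + rho k) ^+ 2 + 2 * rho k ^+ 2) * S k))).
  by rewrite /bk; ring.
lra.
Qed.

Lemma cum_bound (MT : M^T = M)
  (hdg : forall a x, differentiable (gP a) x) (L : R) (L0 : 0 < L)
  (hlip : forall a, gradient_continuous L (fun x => P x a))
  lam (hlam : forall x, lam * sqn x <= dot (x *m M) x) u' v
  (hck : forall k : 'I_N, 0 < lam * dinv k - L) :
  forall k, (k <= N)%N ->
  S k <= Cum (fun k => lam * dinv k - L) bk k * \sum_(i < N) sqn (Tk u' v X i).
Proof.
set Y := \sum_(i < N) sqn (Tk u' v X i).
have Y0 : 0 <= Y by apply: sumr_ge0 => i _; exact: sqn_ge0.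
elim => [|k IH] hk; first by rewrite /S big_ord0 /= mul0r.
have kN : (k < N)%N by [].
pose ko := Ordinal kN.
have IH' := IH (ltnW hk).
rewrite /S big_ord_recr /= -/(S k).
have -> : Xn k = row ko X := thext_ord 0 0 X ko.
have rb := row_bound MT hdg L0 hlip hlam u' v (hck ko).
have tY : sqn (Tk u' v X ko) <= Y.
  rewrite /Y (bigD1 ko) //= lerDl; by apply: sumr_ge0 => i _; exact: sqn_ge0.
set c := lam * dinv k - L.
have c0 : 0 < c := hck ko.
set C := Cum (fun k => lam * dinv k - L) bk k.
have b0 := bk_ge0 k.
have h1 : bk k * S k <= bk k * (C * Y) by apply: ler_wpM2l.
have h2 : sqn (row ko X) <= (2 * Y + bk k * (C * Y)) / c ^+ 2.
  rewrite ler_pdivlMr ?exprn_gt0 // mulrC.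
  apply: (le_trans rb); lra.
have c2 : c != 0 by rewrite gt_eqF.
have -> : (C + (2 + bk k * C) / c ^+ 2) * Y = C * Y + (2 * Y + bk k * (C * Y)) / c ^+ 2.
  by field.
move: IH'; rewrite -/C => IH'.
lra.
Qed.

End Fwd.

Lemma fwd_bound (MT : M^T = M)
  (hdg : forall a x, differentiable (gP a) x) (L : R) (L0 : 0 < L)
  (hlip : forall a, gradient_continuous L (fun x => P x a))
  lam (hlam : forall x, lam * sqn x <= dot (x *m M) x)
  (hck : forall k : 'I_N, 0 < lam * dinv k - L) u' v x :
  (Cum (fun k => lam * dinv k - L) bk N + 1)^-1 * sqn x <= sqn (Psi u' v x).
Proof.
set X := vec_mx x.
have eY : sqn (Psi u' v x) = \sum_(i < N) sqn (Tk u' v X i).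
  by rewrite /Psi sqn_mxvec; apply: eq_bigr => i _; rewrite rowK.
have eX : sqn x = \sum_(i < N) sqn (thext 0 0 X i.+2).
  rewrite -(vec_mxK x) sqn_mxvec -/X; apply: eq_bigr => i _.
  by rewrite (thext_ord 0 0 X i).
have hb := cum_bound X MT hdg L0 hlip hlam u' v hck (leqnn N).
rewrite -eX -eY in hb.
have C0 := Cum_ge0 (fun k => lam * dinv k - L) N.
have Y0 := sqn_ge0 (Psi u' v x).
rewrite ler_pdivrMl ?ltr_pwDr //.
move: hb; set C := Cum _ _ _; move=> hb.
rewrite mulrDl mul1r; nra.
Qed.

End PB2.


Unset Implicit Arguments. Set Strict Implicit. Set Printing Implicit Defensive.

Theorem corollary1 (R : realType) (U : Type) (n N : nat) (M : 'M[R]_n)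
  (del : nat -> R) (th0 thm1 : 'rV[R]_n) (P : 'rV[R]_n -> U -> R)
  (u : 'I_N -> U) (iota : 'I_N -> 'I_N) (L : R) :
  (0 < n)%N -> sym_posdef M -> (1 <= N)%N ->
  (forall m, (m <= N)%N -> 0 < del m) ->
  0 < L ->
  (forall a : U, twice_diff_loclip_hess (fun x => P x a)) ->
  (forall a : U, curvature_bounded L (fun x => P x a)) ->
  (forall m, (1 <= m <= N)%N -> del m < Num.sqrt (sigma_min M / L)) ->
  (* (i) *)
  (forall (k : 'I_N) (Th : 'M[R]_(N, n)),
      PL (fun t => Lambda_i M del th0 thm1 P u iota k (setrow Th k t)))
  /\
  (* (ii) *)
  (exists2 c : R, 0 < c & forall (u' : 'I_N -> U) (v : 'rV[R]_(N * n)),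
      c <= sigma_min (Jmat M del th0 thm1 P u' iota v))
  /\
  (* (iii) *)
  PL (Lambda M del th0 thm1 P u iota).
Proof.
move=> n0 spd N1 hdel L0 htw hcb hsq.
have MT : M^T = M := spd.1.
have [lam [lam0 [hlam sigl]]] := sigma_M n0 spd.
have hdiff : forall a x, differentiable (fun y => P y a) x by move=> a x; exact: (htw a).1.
have hdg : forall a x, differentiable (gP P a) x by move=> a x; exact: (htw a).2.1.
have hlip : forall a, gradient_continuous L (fun x => P x a) by move=> a; exact: (hcb a).2.
have hck : forall k : 'I_N, 0 < lam * dinv del k - L.
  move=> k.
  have kN : (1 <= k.+1 <= N)%N by rewrite ltn_ord.
  have d0 : 0 < del k.+1 by apply: hdel; rewrite ltn_ord.
  have hs := hsq _ kN.
  set d := del k.+1 in d0 hs.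
  have sg0 : 0 <= sigma_min M / L by rewrite divr_ge0 ?sqrtr_ge0 // ltW.
  have h2 : d * d < Num.sqrt (sigma_min M / L) * Num.sqrt (sigma_min M / L).
    by apply: ltr_pM => //; exact: ltW.
  have e := sqr_sqrtr sg0; rewrite expr2 in e; rewrite e -expr2 in h2.
  have h3 : d ^+ 2 < lam / L.
    apply: (lt_le_trans h2); rewrite ler_pM2r ?invr_gt0 //.
  rewrite ltr_pdivlMr // in h3.
  rewrite /dinv subr_gt0 -/d.
  by rewrite ltr_pdivlMr ?exprn_gt0 // mulrC.
set cF := (Cum (fun k => lam * dinv del k - L) (bk M del) N + 1)^-1.
have cF0 : 0 < cF by rewrite invr_gt0 ltr_pwDr // Cum_ge0.
have fwd : forall u' v x, cF * sqn x <= sqn (x *m PhiG M del P iota u' v).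
  by move=> u' v x; rewrite PhiG_mul; exact: fwd_bound.
have der : forall u' v, (forall a e, derivable (fun y => Gvec M del th0 thm1 P u' iota y 0 a) v e) /\
    (forall a e, derive (fun y => Gvec M del th0 thm1 P u' iota y 0 a) v e = (e *m PhiG M del P iota u' v) 0 a).
  move=> u' v; split => a e; have [h1 h2] := Gvec_comp del th0 thm1 iota MT hdiff hdg u' v a e; first by [].
  by rewrite h2 PhiG_mul.
split; first by move=> k Th; have H := (part_i th0 thm1 iota MT hdiff hdg L0 hlip hlam u Th (hck k)); exact H.
split.
  exists (Num.sqrt cF); first by rewrite sqrtr_gt0.
  move=> u' v.
  have [_ hD] := der u' v.
  rewrite /Jmat (jac_Phi hD).
  apply: sigma_lb; first by rewrite muln_gt0 n0 andbT.
  by move=> x; rewrite trmxK; exact: fwd.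
rewrite Lambda_eq; apply: (PL_core2 (c := cF)) => // t.
have [hd hD] := der u t.
rewrite (grad_hsqn hd hD).
exact: tr_bound.
Qed.
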